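(* Let $k,r\in\mathbb N$ with $r\ge2$, let $s_1,\dots,s_r\in\mathbb N$ with $s_i\le k$, let $H_1,\dots,H_r$ be graphs with $1\le v(H_i)\le s_i$, and let $N\in\mathbb N$ with $N\ge r^{C(k+t)}$, where $t=\sum_i s_i$. Let $\mathbf H=(H_i)$, $\mathbf s=(s_i)$. Then for every graph $G$ on $N$ vertices with $G\in\mathcal B'(\mathbf H)\cap\mathcal E(\mathbf s)$ and every $(S,c)\in\mathbf S(G)$, the hypergraph $\mathfrak I_{H_i^-,G_i,G}[W]$ is $(p,p|W|)$-Janson for every $i\in[r]$ and every $W\subset S$ with $|W|\ge\delta N/(8r)$.
   Context: Constants: $C=300$, $\delta=r^{-50}$, $p=\frac1{2^{25}k^2r^4}$. $H_i^-$ is the graph obtained from $H_i$ by deleting a vertex. Hypergraphs are identified with their edge sets; $\mathcal G[W]=\{E\in\mathcal G:E\subset W\}$. For $\nu:\mathcal G\to\mathbb R_{\ge0}$: $e(\nu)=\sum_E\nu(E)$, $d_\nu(L)=\sum_{E\in\mathcal G,L\subset E}\nu(E)$, $\Lambda_p(\nu)=\sum_{L\subset V(\mathcal G),|L|\ge2}d_\nu(L)^2p^{-|L|}$; for $R>0$, $\mathcal G$ is $(p,R)$-Janson if some $\nu$ has $\Lambda_p(\nu)<e(\nu)^2/R$. For graphs $F,G$ and $G'\subset G$, $\mathfrak I_{F,G',G}$ is the hypergraph on $V(G)$ with edges the sets $L$ with $G'[L]=G[L]\cong F$. For a colouring $c$ with colours in $[r]$, $G_i$ is the subgraph of edges of colour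 $i$. $\mathcal E(\mathbf s)$: graphs $G$ such that for all $t'<t$, all graphs $F_1,\dots,F_r$ with $v(F_i)\le s_i$ and $\sum v(F_i)=t'$, every $W\subset V(G)$ with $|W|\ge(\delta/(8r))^{t-t'}v(G)$ and every $c:E(G[W])\to[r]$, some $\mathfrak I_{F_i,G_i,G}[W]$ is $(p,p|W|)$-Janson. $\mathcal B'(\mathbf H)$: graphs $G$ for which there are $S\subset V(G)$ with $|S|\ge\delta^{2/3}v(G)$ and $c:E(G[S])\to[r]$ with $\mathfrak I_{H_i,G_i,G}[S]$ not $(p,2^{-9}r^{-1}\delta p\,v(G))$-Janson for all $i$. $\mathbf S(G)$: the set of pairs $(S,c)$ with $S\subset V(G)$, $|S|\ge\delta^{2/3}N$, $c:E(G[S])\to[r]$, such that $\mathfrak I_{H_i,G_i,G}[S]$ is not $(p,2^{-9}r^{-1}\delta pN)$-Janson for every $i\in[r]$. *)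

(* Defs.v *)
From HB Require Import structures.
From mathcomp Require Import all_boot all_order all_algebra.
From mathcomp Require Import reals.
Set Implicit Arguments. Unset Strict Implicit. Unset Printing Implicit Defensive.
Import Order.TTheory GRing.Theory Num.Theory.
Local Open Scope ring_scope.

Definition is_graph (U : finType) (F : rel U) : Prop :=
  symmetric F /\ irreflexive F.

Definition copy_hg (U T : finType) (F : rel U) (G' G : rel T) : {set {set T}} :=
  [set L : {set T} |
     [forall x in L, forall y in L, G' x y == G x y] &&
     [exists f : {ffun U -> T},
        [&& injectiveb f, [set f u | u : U] == L &
            [forall a : U, forall b : U, F a b == G (f a) (f b)]]]].

Definition hg_on (T : finType) (Hg : {set {set T}}) (W : {set T}) : {set {set T}} :=
  [set E in Hg | E \subset W].

Definition e_nu (R : realType) (T : finType) (Hg : {set {set T}}) (nu : {set T} -> R) : R :=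
  \sum_(E in Hg) nu E.

Definition d_nu (R : realType) (T : finType) (Hg : {set {set T}}) (nu : {set T} -> R)
  (L : {set T}) : R :=
  \sum_(E in Hg | L \subset E) nu E.

Definition Lambda (R : realType) (T : finType) (p : R) (Hg : {set {set T}})
  (nu : {set T} -> R) : R :=
  \sum_(L : {set T} | (1 < #|L|)%N) (d_nu Hg nu L) ^+ 2 / p ^+ #|L|.

(* (p,Rr)-Janson; nu is only relevant on the edges of Hg. *)
Definition janson (R : realType) (T : finType) (p Rr : R) (Hg : {set {set T}}) : Prop :=
  exists nu : {set T} -> R,
    (forall E, E \in Hg -> 0 <= nu E) /\
    Lambda p Hg nu < (e_nu Hg nu) ^+ 2 / Rr.

Definition p_const (R : realType) (k r : nat) : R :=
  ((2 ^ 25 * k ^ 2 * r ^ 4)%N%:R)^-1.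
Definition delta (R : realType) (r : nat) : R := (r%:R ^+ 50)^-1.

(* Colour class i of a colouring c of the edges of G[S] (edges seen as
   2-element vertex sets): spanning subgraph of G. *)
Definition colg (T : finType) (r : nat) (G : rel T) (S : {set T})
  (c : {set T} -> 'I_r) (i : 'I_r) : rel T :=
  fun x y => [&& G x y, x \in S, y \in S & c [set x; y] == i].

Definition del_vertex (n : nat) (F : rel 'I_n) (v : 'I_n) : rel {x : 'I_n | x != v} :=
  fun a b => F (val a) (val b).
Arguments del_vertex {n} F v.

Definition in_E (R : realType) (k r : nat) (s : 'I_r -> nat) (N : nat)
  (G : rel 'I_N) : Prop :=
  forall (t' : nat), (t' < \sum_(i < r) s i)%N ->
  forall (nF : 'I_r -> nat) (F : forall i : 'I_r, rel 'I_(nF i)),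
    (forall i, is_graph (F i)) -> (forall i, nF i <= s i)%N ->
    (\sum_(i < r) nF i)%N = t' ->
  forall W : {set 'I_N},
    (delta R r / (8 * r)%N%:R) ^+ (\sum_(i < r) s i - t')%N * N%:R <= #|W|%:R ->
  forall c : {set 'I_N} -> 'I_r,
  exists i : 'I_r,
    janson (p_const R k r) (p_const R k r * #|W|%:R)
      (hg_on (copy_hg (F i) (colg G W c i) G) W).

(* (S,c) in S(G).  |S| >= delta^(2/3) N is written as |S|^3 >= delta^2 N^3. *)
Definition in_SG (R : realType) (k r : nat) (nH : 'I_r -> nat)
  (H : forall i : 'I_r, rel 'I_(nH i)) (N : nat) (G : rel 'I_N)
  (S : {set 'I_N}) (c : {set 'I_N} -> 'I_r) : Prop :=
  delta R r ^+ 2 * N%:R ^+ 3 <= #|S|%:R ^+ 3 /\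
  forall i : 'I_r,
    ~ janson (p_const R k r)
        ((2 ^ 9)%N%:R^-1 * r%:R^-1 * delta R r * p_const R k r * N%:R)
        (hg_on (copy_hg (H i) (colg G S c i) G) S).

Definition in_B' (R : realType) (k r : nat) (nH : 'I_r -> nat)
  (H : forall i : 'I_r, rel 'I_(nH i)) (N : nat) (G : rel 'I_N) : Prop :=
  exists S c, in_SG R k H G S c.

(* Main.v *)
Require Import Defs.
From HB Require Import structures.
From mathcomp Require Import all_boot all_order all_algebra.
From mathcomp Require Import reals.
From mathcomp Require Import zify ring lra.
Import Order.TTheory GRing.Theory Num.Theory.
Local Open Scope ring_scope.

Lemma copy_hg_iso (U U' T : finType) (F : rel U) (F' : rel U') (G' G : rel T)
  (g : U' -> U) : bijective g -> (forall a b, F' a b = F (g a) (g b)) ->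
  copy_hg F' G' G = copy_hg F G' G.
Proof.
move=> [h gK hK] eF; apply/setP => L; rewrite !inE; congr andb.
apply/existsP/existsP => -[f /and3P[/injectiveP fi /eqP fL /forallP fe]].
- exists [ffun u => f (h u)]; apply/and3P; split.
  + apply/injectiveP => x y; rewrite !ffunE => /fi; exact: (can_inj hK).
  + apply/eqP; rewrite -fL; apply/setP => y; apply/imsetP/imsetP => -[u _ ->].
      by exists (h u) => //; rewrite ffunE.
    by exists (g u) => //; rewrite ffunE gK.
  + apply/forallP => a; apply/forallP => b; rewrite !ffunE.
    by have := forallP (fe (h a)) (h b); rewrite eF !hK.
- exists [ffun a => f (g a)]; apply/and3P; split.
  + apply/injectiveP => x y; rewrite !ffunE => /fi; exact: (can_inj gK).
  + apply/eqP; rewrite -fL; apply/setP => y; apply/imsetP/imsetP => -[u _ ->].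
      by exists (g u) => //; rewrite ffunE.
    by exists (h u) => //; rewrite ffunE hK.
  + apply/forallP => a; apply/forallP => b; rewrite !ffunE.
    by have := forallP (fe (g a)) (g b); rewrite eF.
Qed.

Lemma hg_on_colg (U : finType) (N r : nat) (F : rel U) (G : rel 'I_N)
  (S W : {set 'I_N}) (c : {set 'I_N} -> 'I_r) (j : 'I_r) :
  W \subset S ->
  hg_on (copy_hg F (colg G W c j) G) W = hg_on (copy_hg F (colg G S c j) G) W.
Proof.
move=> WS; apply/setP => E; rewrite !inE.
case EW: (E \subset W); rewrite ?andbF ?andbT //.
idtac.
congr andb.
apply: eq_forallb_in => x xE; apply: eq_forallb_in => y yE.
have xW := subsetP EW x xE; have yW := subsetP EW y yE.
by rewrite /colg xW yW (subsetP WS x xW) (subsetP WS y yW).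
Qed.

Arguments hg_on_colg {U N r} F {G S W c j}.

Lemma janson_mono (R : realType) (T : finType) (p R1 R2 : R)
  (Hg : {set {set T}}) (W S : {set T}) :
  W \subset S -> 0 < R2 -> R2 <= R1 ->
  janson p R1 (hg_on Hg W) -> janson p R2 (hg_on Hg S).
Proof.
move=> WS R2p R21 [nu [nu0 lt]].
exists (fun E : {set T} => if E \subset W then nu E else 0); split.
  move=> E; rewrite inE => /andP[EH _]; case: ifP => EW //.
  by apply: nu0; rewrite inE EH EW.
have key : forall Q : pred {set T},
  \sum_(E in hg_on Hg S | Q E) (if E \subset W then nu E else 0)
  = \sum_(E in hg_on Hg W | Q E) nu E.
  move=> Q; rewrite -big_mkcondr; apply: eq_bigl => E; rewrite !inE.
  case EW: (E \subset W); rewrite ?andbF ?andbT //.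
  by rewrite (subset_trans EW WS) andbT andbC.
have eE : e_nu (hg_on Hg S) (fun E : {set T} => if E \subset W then nu E else 0)
        = e_nu (hg_on Hg W) nu.
  have := key predT; rewrite /e_nu.
  by under eq_bigl do rewrite andbT; under [in RHS]eq_bigl do rewrite andbT.
have eL : Lambda p (hg_on Hg S) (fun E : {set T} => if E \subset W then nu E else 0)
        = Lambda p (hg_on Hg W) nu.
  by apply: eq_bigr => L _; rewrite /d_nu key.
rewrite eL eE; apply: (lt_le_trans lt).
have R1p : 0 < R1 by apply: lt_le_trans R21.
by rewrite ler_wpM2l ?sqr_ge0 // lef_pV2 ?posrE.
Qed.

Arguments janson_mono {R T p R1 R2 Hg W S}.

Theorem lemma6p5 (R : realType) (k r : nat) (s : 'I_r -> nat) (nH : 'I_r -> nat)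
  (H : forall i : 'I_r, rel 'I_(nH i)) (N : nat) (G : rel 'I_N) :
  (2 <= r)%N ->
  (forall i, s i <= k)%N ->
  (forall i, is_graph (H i)) ->
  (forall i, 1 <= nH i <= s i)%N ->
  (r ^ (300 * (k + \sum_(i < r) s i)) <= N)%N ->
  is_graph G ->
  in_B' R k H G ->
  in_E R k s G ->
  forall (S : {set 'I_N}) (c : {set 'I_N} -> 'I_r), in_SG R k H G S c ->
  forall (i : 'I_r) (v : 'I_(nH i)) (W : {set 'I_N}),
    W \subset S ->
    delta R r * N%:R / (8 * r)%N%:R <= #|W|%:R ->
    janson (p_const R k r) (p_const R k r * #|W|%:R)
      (hg_on (copy_hg (del_vertex (H i) v) (colg G S c i) G) W).
Proof.
move=> r2 sk Hg nHs Nbig Gg _ hE S c [Scard notJ] i v W WS Wbig.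
pose P (j : 'I_r) : pred 'I_(nH j) := fun x => (j != i) || (val x != val v).
pose nF (j : 'I_r) := #|{: {x : 'I_(nH j) | P j x}}|.
pose F (j : 'I_r) : rel 'I_(nF j) :=
  fun a b => H j (val (enum_val a)) (val (enum_val b)).
have cardi : nF i = (nH i).-1.
  rewrite /nF card_sig; transitivity #|predC1 v|; last by rewrite cardC1 card_ord.
  by apply: eq_card => x; rewrite !inE /P eqxx /=.
have cardj : forall j, j != i -> nF j = nH j.
  move=> j ji; rewrite /nF card_sig; transitivity #|'I_(nH j)|; last by rewrite card_ord.
  by apply: eq_card => x; rewrite !inE /P ji.
have nFH : forall j, (nF j <= nH j)%N.
  move=> j; case: (eqVneq j i) => [->|ji]; first by rewrite cardi leq_pred.
  by rewrite cardj.
have nFs : forall j, (nF j <= s j)%N.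
  by move=> j; apply: leq_trans (nFH j) _; case/andP: (nHs j).
have Fg : forall j, is_graph (F j).
  move=> j; have [sy ir] := Hg j; split.
    by move=> a b; rewrite /F sy.
  by move=> a; rewrite /F ir.
have ltsum : (\sum_(j < r) nF j < \sum_(j < r) s j)%N.
  rewrite (bigD1 i) //= [X in (_ < X)%N](bigD1 i) //=.
  have h3 : (\sum_(j < r | j != i) nF j <= \sum_(j < r | j != i) s j)%N.
    by apply: leq_sum => j _; exact: nFs.
  rewrite cardi; case/andP: (nHs i) => h1 h2.
  by rewrite -addSn prednK //; exact: leq_add.
have kpos : (0 < k)%N.
  by case/andP: (nHs i) => h1 h2; apply: leq_trans (sk i); apply: leq_trans h2.
have rpos : (0 < r)%N by apply: leq_trans r2.
have Npos : (0 < N)%N by apply: leq_trans Nbig; rewrite expn_gt0 rpos.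
have pp0 : 0 < p_const R k r.
  rewrite /p_const invr_gt0 ltr0n.
  have e1 : (0 < 2 ^ 25)%N by rewrite expn_gt0.
  have e2 : (0 < k ^ 2)%N by rewrite expn_gt0 kpos.
  have e3 : (0 < r ^ 4)%N by rewrite expn_gt0 rpos.
  by rewrite muln_gt0 e3 muln_gt0 e1 e2.
have d0 : 0 < delta R r by rewrite /delta invr_gt0 exprn_gt0 // ltr0n.
have d1 : delta R r <= 1.
  by rewrite /delta invf_le1 ?exprn_gt0 ?ltr0n // exprn_ege1 // ler1n.
have r8 : 0 < (8 * r)%N%:R :> R by rewrite ltr0n muln_gt0 rpos.
set x := delta R r / (8 * r)%N%:R.
have x0 : 0 <= x by rewrite /x divr_ge0 // ltW.
have x1 : x <= 1.
  rewrite /x ler_pdivrMr // mul1r; apply: le_trans d1 _.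
  by rewrite ler1n muln_gt0 rpos.
have Wb : x ^+ (\sum_(j < r) s j - \sum_(j < r) nF j) * N%:R <= #|W|%:R.
  have m1 : (0 < \sum_(j < r) s j - \sum_(j < r) nF j)%N by rewrite subn_gt0.
  rewrite -(prednK m1) exprS; apply: le_trans Wbig.
  rewrite [X in _ <= X]mulrAC -/x; apply: ler_wpM2r => //.
  by apply: ler_piMr => //; apply: exprn_ile1.
have [j Jj] := hE _ ltsum nF F Fg nFs erefl W Wb c.
case: (eqVneq j i) => [eji|nji].
  subst j.
  have gdef : forall a : 'I_(nF i), val (enum_val a) != v.
    by move=> a; case/orP: (valP (enum_val a)) => [h|//]; rewrite eqxx in h.
  pose g := fun a : 'I_(nF i) => exist (fun x : 'I_(nH i) => x != v) (val (enum_val a)) (gdef a).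
  rewrite -(hg_on_colg _ WS) -(@copy_hg_iso _ _ _ (del_vertex (H i) v) (F i) _ _ g) //.
  apply: inj_card_bij.
    by move=> a b /(congr1 val) /= /val_inj /enum_val_inj.
  rewrite card_sig card_ord cardi.
  have -> : #|[pred x0 : 'I_(nH i) | x0 != v]| = #|predC1 v| by apply: eq_card.
  by rewrite cardC1 card_ord.
exfalso; apply: (notJ j).
pose g := fun a : 'I_(nF j) => val (enum_val a).
have Jj' := Jj.
rewrite (hg_on_colg _ WS) (@copy_hg_iso _ _ _ (H j) (F j) _ _ g) // in Jj'.
  apply: (janson_mono WS _ _ Jj').
    by rewrite mulr_gt0 ?ltr0n // mulr_gt0 // mulr_gt0 // mulr_gt0 ?invr_gt0 ?ltr0n ?expn_gt0.
  apply: (@le_trans _ _ (p_const R k r * (delta R r * N%:R / (8 * r)%N%:R))); last first.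
    by rewrite ler_wpM2l // ltW.
  set X := r%:R^-1 * delta R r * p_const R k r * N%:R.
  have X0 : 0 <= X.
    by rewrite /X mulr_ge0 ?ler0n // mulr_ge0 ?(ltW pp0) // mulr_ge0 ?(ltW d0) // invr_ge0 ler0n.
  have -> : (2 ^ 9)%:R^-1 / r%:R * delta R r * p_const R k r * N%:R = X * (512%:R)^-1.
    by rewrite /X (_ : (2 ^ 9)%N = 512%N) //; ring.
  have -> : p_const R k r * (delta R r * N%:R / (8 * r)%N%:R) = X * (8%:R)^-1.
    by rewrite /X natrM invfM; ring.
  by rewrite ler_wpM2l // lef_pV2 ?posrE ?ltr0n // ler_nat.
apply: inj_card_bij.
  by move=> a b /val_inj /enum_val_inj.
by rewrite !card_ord cardj.
Qed.
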